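(* In the category $\mathbf{Lens}$, the class of all morphisms that are left orthogonal to every monomorphism is exactly the class of all epimorphisms.
   Context: A lens $F\colon \mathbf{A}\to\mathbf{B}$ between small categories consists of a functor $F\colon\mathbf{A}\to\mathbf{B}$ (the get functor) together with, for each object $A$ of $\mathbf{A}$, a function $\varphi_{F,A}$ from the set of morphisms of $\mathbf{B}$ with domain $FA$ to the set of morphisms of $\mathbf{A}$ with domain $A$, such that: $F(\varphi_{F,A}b)=b$; $\varphi_{F,A}(\mathrm{id}_{FA})=\mathrm{id}_A$; and $\varphi_{F,A}(b'\circ b)=\varphi_{F,A'}(b')\circ\varphi_{F,A}(b)$ whenever $b$ has domain $FA$, $A'$ is the codomain of $\varphi_{F,A}b$, and $b'$ has domain $FA'$. $\mathbf{Lens}$ is the category of small categories and lenses, with composite of $F\colon\mathbf{A}\to\mathbf{B}$, $G\colon\mathbf{B}\to\mathbf{C}$ having get functor $G\circ F$ and puts $\varphi_{G\circ F,A}(c)=\varphi_{F,A}(\varphi_{G,FA}(c))$. A morphism $e\colon A\to B$ is left orthogonal to $m\colon C\to D$ if for all $f\colon A\to C$ and $g\colon B\to D$ with $g\circ e=m\circ f$ there is a unique $h\colon B\to C$ with $h\circ e=f$ and $m\circ h=g$. *)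

(* Defs.v *)
From Stdlib Require Import ProofIrrelevance.



Record Cat := {
  Ob : Type;
  Mor : Type;
  dom : Mor -> Ob;
  cod : Mor -> Ob;
  idm : Ob -> Mor;
  comp : forall g f : Mor, cod f = dom g -> Mor;
  dom_idm : forall x, dom (idm x) = x;
  cod_idm : forall x, cod (idm x) = x;
  dom_comp : forall g f H, dom (comp g f H) = dom f;
  cod_comp : forall g f H, cod (comp g f H) = cod g;
  comp_idl : forall f H, comp (idm (cod f)) f H = f;
  comp_idr : forall f H, comp f (idm (dom f)) H = f;
  comp_assoc : forall h g f H1 H2 H3 H4,
    comp h (comp g f H1) H2 = comp (comp h g H3) f H4
}.

Arguments dom {c} _.
Arguments cod {c} _.
Arguments idm {c} _.
Arguments comp {c} _ _ _.
Arguments dom_idm {c} x.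
Arguments dom_comp {c} g f H.

Record Functor (A B : Cat) := {
  fo : Ob A -> Ob B;
  fm : Mor A -> Mor B;
  fm_dom : forall f, dom (fm f) = fo (dom f);
  fm_cod : forall f, cod (fm f) = fo (cod f);
  fm_idm : forall x, fm (idm x) = idm (fo x);
  fm_comp : forall g f H H', fm (comp g f H) = comp (fm g) (fm f) H'
}.

Arguments fo {A B} _ _.
Arguments fm {A B} _ f.
Arguments fm_dom {A B} _ f.
Arguments fm_cod {A B} _ f.
Arguments fm_idm {A B} _ x.
Arguments fm_comp {A B} _ g f H H'.

Record Lens (A B : Cat) := {
  get : Functor A B;
  put : forall a : Ob A, {b : Mor B | dom b = fo get a} -> Mor A;
  put_dom : forall a b, dom (put a b) = a;
  put_get : forall a b, fm get (put a b) = proj1_sig b;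
  put_idm : forall a H, put a (exist _ (idm (fo get a)) H) = idm a;
  put_comp : forall a (b : {b : Mor B | dom b = fo get a}) (b' : Mor B)
      (Hb' : dom b' = fo get (cod (put a b)))
      (Hc : cod (proj1_sig b) = dom b')
      (Hd : dom (comp b' (proj1_sig b) Hc) = fo get a)
      (He : cod (put a b) = dom (put (cod (put a b)) (exist _ b' Hb'))),
    put a (exist _ (comp b' (proj1_sig b) Hc) Hd)
    = comp (put (cod (put a b)) (exist _ b' Hb')) (put a b) He
}.

Arguments get {A B} l.
Arguments put {A B} l a b.
Arguments put_dom {A B} l a b.
Arguments put_get {A B} l a b.
Arguments put_idm {A B} l a H.
Arguments put_comp {A B} l a b b' Hb' Hc Hd He.

Lemma sig_eq {T : Type} {P : T -> Prop} (x y : sig P) :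
  proj1_sig x = proj1_sig y -> x = y.
Proof.
  destruct x as [x px], y as [y py]; simpl; intro E; subst y.
  f_equal; apply proof_irrelevance.
Qed.

Lemma comp_congr {C : Cat} (g g' f f' : Mor C) H H' :
  g = g' -> f = f' -> comp g f H = comp g' f' H'.
Proof.
  intros -> ->; f_equal; apply proof_irrelevance.
Qed.

Lemma put_congr {A B} (l : Lens A B) x y b b' :
  x = y -> proj1_sig b = proj1_sig b' -> put l x b = put l y b'.
Proof.
  intros E E'; subst y; f_equal; apply sig_eq; exact E'.
Qed.

Definition fcomp {A B C} (G : Functor B C) (F : Functor A B) : Functor A C.
Proof.
  refine {| fo := fun a => fo G (fo F a);
            fm := fun f => fm G (fm F f) |}.
  - intro f; rewrite fm_dom, fm_dom; reflexivity.
  - intro f; rewrite fm_cod, fm_cod; reflexivity.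
  - intro x; rewrite fm_idm, fm_idm; reflexivity.
  - intros g f H H'.
    assert (H1 : cod (fm F f) = dom (fm F g))
      by (rewrite fm_cod, fm_dom, H; reflexivity).
    rewrite (fm_comp F g f H H1).
    apply fm_comp.
Defined.

Definition lcomp {A B C} (G : Lens B C) (F : Lens A B) : Lens A C.
Proof.
  refine {| get := fcomp (get G) (get F);
            put := fun a c =>
              put F a (exist _ (put G (fo (get F) a) c) (put_dom G _ c)) |}.
  - intros a c; apply put_dom.
  - intros a c; simpl; rewrite put_get; simpl; apply put_get.
  - intros a H; simpl.
    rewrite <- (put_idm F a (dom_idm (fo (get F) a))).
    apply put_congr; [reflexivity|]; simpl; apply put_idm.
  - intros a c c' Hc' Hc Hd He; simpl in *.
    set (bG := exist (fun b => dom b = fo (get F) a)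
                 (put G (fo (get F) a) c) (put_dom G _ c)).
    set (a1 := cod (put F a bG)).
    assert (Ecod : cod (put G (fo (get F) a) c) = fo (get F) a1).
    { transitivity (cod (fm (get F) (put F a bG))).
      - rewrite put_get; reflexivity.
      - apply fm_cod. }
    assert (Hb' : dom c' = fo (get G) (cod (put G (fo (get F) a) c)))
      by (rewrite Ecod; exact Hc').
    assert (E1 : dom (put G (cod (put G (fo (get F) a) c)) (exist _ c' Hb'))
                 = cod (put G (fo (get F) a) c)) by apply put_dom.
    assert (He1 : cod (put G (fo (get F) a) c)
                  = dom (put G (cod (put G (fo (get F) a) c)) (exist _ c' Hb')))
      by (symmetry; exact E1).
    pose proof (put_comp G (fo (get F) a) c c' Hb' Hc Hd He1) as PG.
    set (b' := put G (cod (put G (fo (get F) a) c)) (exist _ c' Hb')) in *.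
    assert (Hb'F : dom b' = fo (get F) (cod (put F a bG)))
      by (unfold b'; rewrite put_dom; exact Ecod).
    assert (Hc2 : cod (proj1_sig bG) = dom b') by (simpl; exact He1).
    assert (Hd2 : dom (comp b' (proj1_sig bG) Hc2) = fo (get F) a)
      by (rewrite dom_comp; apply put_dom).
    assert (He2 : cod (put F a bG) = dom (put F (cod (put F a bG)) (exist _ b' Hb'F)))
      by (rewrite put_dom; reflexivity).
    pose proof (put_comp F a bG b' Hb'F Hc2 Hd2 He2) as PF.
    transitivity (put F a (exist _ (comp b' (proj1_sig bG) Hc2) Hd2)).
    + apply put_congr; [reflexivity|]; simpl. rewrite PG.
      apply comp_congr; reflexivity.
    + rewrite PF. apply comp_congr; [|reflexivity].
      apply put_congr; [reflexivity|]; simpl.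
      unfold b'; apply put_congr; [exact Ecod|reflexivity].
Defined.

Definition lens_mono {C D : Cat} (m : Lens C D) : Prop :=
  forall (X : Cat) (g h : Lens X C), lcomp m g = lcomp m h -> g = h.

Definition lens_epi {A B : Cat} (e : Lens A B) : Prop :=
  forall (X : Cat) (g h : Lens B X), lcomp g e = lcomp h e -> g = h.

Definition lens_left_orth {A B C D : Cat} (e : Lens A B) (m : Lens C D) : Prop :=
  forall (f : Lens A C) (g : Lens B D),
    lcomp g e = lcomp m f ->
    exists! h : Lens B C, lcomp h e = f /\ lcomp m h = g.

(* Main.v *)
Require Import Defs.
From Stdlib Require Import ProofIrrelevance FunctionalExtensionality ClassicalEpsilon Classical.

Lemma lens_ext {A B} (L1 L2 : Lens A B) :
  (forall a, fo (get L1) a = fo (get L2) a) ->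
  (forall f, fm (get L1) f = fm (get L2) f) ->
  (forall a x H1 H2, put L1 a (exist _ x H1) = put L2 a (exist _ x H2)) ->
  L1 = L2.
Proof.
  destruct L1 as [G1 P1 pd1 pg1 pi1 pc1], L2 as [G2 P2 pd2 pg2 pi2 pc2]; simpl.
  destruct G1 as [fo1 fm1 a1 b1 c1 d1], G2 as [fo2 fm2 a2 b2 c2 d2]; simpl in *.
  intros Ho Hm Hp.
  assert (fo1 = fo2) by (apply functional_extensionality; exact Ho). subst fo2.
  assert (fm1 = fm2) by (apply functional_extensionality; exact Hm). subst fm2.
  assert (a1 = a2) by apply proof_irrelevance. subst a2.
  assert (b1 = b2) by apply proof_irrelevance. subst b2.
  assert (c1 = c2) by apply proof_irrelevance. subst c2.
  assert (d1 = d2) by apply proof_irrelevance. subst d2.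
  assert (P1 = P2).
  { apply functional_extensionality_dep; intro a; apply functional_extensionality.
    intros [x H]. apply Hp. }
  subst P2.
  assert (pd1 = pd2) by apply proof_irrelevance. subst pd2.
  assert (pg1 = pg2) by apply proof_irrelevance. subst pg2.
  assert (pi1 = pi2) by apply proof_irrelevance. subst pi2.
  assert (pc1 = pc2) by apply proof_irrelevance. subst pc2.
  reflexivity.
Qed.

Lemma leq_fo {A B} {L1 L2 : Lens A B} : L1 = L2 -> forall a, fo (get L1) a = fo (get L2) a.
Proof. intros ->; reflexivity. Qed.
Lemma leq_fm {A B} {L1 L2 : Lens A B} : L1 = L2 -> forall f, fm (get L1) f = fm (get L2) f.
Proof. intros ->; reflexivity. Qed.
Lemma leq_put {A B} {L1 L2 : Lens A B} : L1 = L2 ->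
  forall a x H1 H2, put L1 a (exist _ x H1) = put L2 a (exist _ x H2).
Proof. intros ->; intros; apply put_congr; reflexivity. Qed.

Lemma fmH {A B} (F : Functor A B) (g f : Mor A) (H : cod f = dom g) :
  cod (fm F f) = dom (fm F g).
Proof. rewrite fm_cod, fm_dom, H; reflexivity. Qed.

Lemma fm_comp' {A B} (F : Functor A B) (g f : Mor A) (H : cod f = dom g) H' :
  fm F (comp g f H) = comp (fm F g) (fm F f) H'.
Proof. apply fm_comp. Qed.

Lemma put_comp' {A B} (l : Lens A B) a (x : Mor B) (Hx : dom x = fo (get l) a)
  (y : Mor B) (Hy : dom y = fo (get l) (cod (put l a (exist _ x Hx))))
  (z : Mor B) (Hz : dom z = fo (get l) a) (Hc : cod x = dom y) :
  z = comp y x Hc -> forall He,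
  put l a (exist _ z Hz) = comp (put l _ (exist _ y Hy)) (put l a (exist _ x Hx)) He.
Proof.
  intros E He; subst z. exact (put_comp l a (exist _ x Hx) y Hy Hc Hz He).
Qed.

Definition KPOb {C D} (m : Lens C D) := {p : Ob C * Ob C | fo (get m) (fst p) = fo (get m) (snd p)}.
Definition KPMor {C D} (m : Lens C D) := {p : Mor C * Mor C | fm (get m) (fst p) = fm (get m) (snd p)}.

Lemma KPdom_pf {C D} (m : Lens C D) (p : KPMor m) :
  fo (get m) (dom (fst (proj1_sig p))) = fo (get m) (dom (snd (proj1_sig p))).
Proof. rewrite <- !fm_dom, (proj2_sig p); reflexivity. Qed.
Lemma KPcod_pf {C D} (m : Lens C D) (p : KPMor m) :
  fo (get m) (cod (fst (proj1_sig p))) = fo (get m) (cod (snd (proj1_sig p))).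
Proof. rewrite <- !fm_cod, (proj2_sig p); reflexivity. Qed.
Lemma KPidm_pf {C D} (m : Lens C D) (x : KPOb m) :
  fm (get m) (idm (fst (proj1_sig x))) = fm (get m) (idm (snd (proj1_sig x))).
Proof. rewrite !fm_idm, (proj2_sig x); reflexivity. Qed.

Definition KPdom {C D} (m : Lens C D) (p : KPMor m) : KPOb m :=
  exist _ (dom (fst (proj1_sig p)), dom (snd (proj1_sig p))) (KPdom_pf m p).
Definition KPcod {C D} (m : Lens C D) (p : KPMor m) : KPOb m :=
  exist _ (cod (fst (proj1_sig p)), cod (snd (proj1_sig p))) (KPcod_pf m p).
Definition KPidm {C D} (m : Lens C D) (x : KPOb m) : KPMor m :=
  exist _ (idm (fst (proj1_sig x)), idm (snd (proj1_sig x))) (KPidm_pf m x).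

Lemma KPcomp_pf {C D} (m : Lens C D) (q p : KPMor m) (H : KPcod m p = KPdom m q) H1 H2 :
  fm (get m) (comp (fst (proj1_sig q)) (fst (proj1_sig p)) H1)
  = fm (get m) (comp (snd (proj1_sig q)) (snd (proj1_sig p)) H2).
Proof.
  rewrite (fm_comp' _ _ _ _ (fmH _ _ _ H1)).
  rewrite (fm_comp' _ _ _ _ (fmH _ _ _ H2)).
  apply comp_congr; [exact (proj2_sig q) | exact (proj2_sig p)].
Qed.

Definition KPcomp {C D} (m : Lens C D) (q p : KPMor m) (H : KPcod m p = KPdom m q) : KPMor m :=
  exist _ (comp (fst (proj1_sig q)) (fst (proj1_sig p))
                       (f_equal (fun z => fst (proj1_sig z)) H),
           comp (snd (proj1_sig q)) (snd (proj1_sig p))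
                       (f_equal (fun z => snd (proj1_sig z)) H)) (KPcomp_pf m q p H _ _).

Definition KP {C D} (m : Lens C D) : Cat.
Proof.
  refine {| Ob := KPOb m; Mor := KPMor m; dom := KPdom m; cod := KPcod m;
            idm := KPidm m; comp := KPcomp m |}.
  - intros [[x1 x2] px]; apply sig_eq; simpl; rewrite !dom_idm; reflexivity.
  - intros [[x1 x2] px]; apply sig_eq; simpl; rewrite !cod_idm; reflexivity.
  - intros [[g1 g2] pg] [[f1 f2] pf] H; apply sig_eq; simpl; rewrite !dom_comp; reflexivity.
  - intros [[g1 g2] pg] [[f1 f2] pf] H; apply sig_eq; simpl; rewrite !cod_comp; reflexivity.
  - intros [[f1 f2] pf] H; apply sig_eq; simpl; rewrite !comp_idl; reflexivity.
  - intros [[f1 f2] pf] H; apply sig_eq; simpl; rewrite !comp_idr; reflexivity.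
  - intros [[h1 h2] ph] [[g1 g2] pg] [[f1 f2] pf] H1 H2 H3 H4; apply sig_eq; simpl.
    f_equal; apply comp_assoc.
Defined.
Definition KPpi1F {C D} (m : Lens C D) : Functor (KP m) C.
Proof.
  refine {| fo := fun x : Ob (KP m) => fst (proj1_sig x);
            fm := fun p : Mor (KP m) => fst (proj1_sig p) |}.
  - reflexivity.
  - reflexivity.
  - reflexivity.
  - intros; simpl. apply comp_congr; reflexivity.
Defined.
Definition KPpi2F {C D} (m : Lens C D) : Functor (KP m) C.
Proof.
  refine {| fo := fun x : Ob (KP m) => snd (proj1_sig x);
            fm := fun p : Mor (KP m) => snd (proj1_sig p) |}.
  - reflexivity.
  - reflexivity.
  - reflexivity.
  - intros; simpl. apply comp_congr; reflexivity.
Defined.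

Lemma KPput1_pf1 {C D} (m : Lens C D) (x : KPOb m) (xi : {b : Mor C | dom b = fst (proj1_sig x)}) :
  dom (fm (get m) (proj1_sig xi)) = fo (get m) (snd (proj1_sig x)).
Proof. rewrite fm_dom, (proj2_sig xi), (proj2_sig x); reflexivity. Qed.
Lemma KPput2_pf1 {C D} (m : Lens C D) (x : KPOb m) (xi : {b : Mor C | dom b = snd (proj1_sig x)}) :
  dom (fm (get m) (proj1_sig xi)) = fo (get m) (fst (proj1_sig x)).
Proof. rewrite fm_dom, (proj2_sig xi), (proj2_sig x); reflexivity. Qed.

Definition KPput1 {C D} (m : Lens C D) (x : KPOb m) (xi : {b : Mor C | dom b = fst (proj1_sig x)}) : KPMor m :=
  exist _ (proj1_sig xi, put m (snd (proj1_sig x)) (exist _ _ (KPput1_pf1 m x xi)))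
    (eq_sym (put_get m (snd (proj1_sig x)) (exist _ _ (KPput1_pf1 m x xi)))).
Definition KPput2 {C D} (m : Lens C D) (x : KPOb m) (xi : {b : Mor C | dom b = snd (proj1_sig x)}) : KPMor m :=
  exist _ (put m (fst (proj1_sig x)) (exist _ _ (KPput2_pf1 m x xi)), proj1_sig xi)
    (put_get m (fst (proj1_sig x)) (exist _ _ (KPput2_pf1 m x xi))).

Definition KPpi1 {C D} (m : Lens C D) : Lens (KP m) C.
Proof.
  refine {| get := KPpi1F m; put := KPput1 m |}.
  - intros [[x1 x2] px] [xi pxi]; apply sig_eq; simpl in *.
    rewrite put_dom, pxi; reflexivity.
  - reflexivity.
  - intros [[x1 x2] px] H; apply sig_eq; simpl in *. f_equal.
    rewrite <- (put_idm m x2 (dom_idm _)). apply put_congr; [reflexivity|]; simpl.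
    rewrite fm_idm, px; reflexivity.
  - intros [[x1 x2] px] [b pb] b' Hb' Hc Hd He; apply sig_eq; simpl in *.
    f_equal; [apply comp_congr; reflexivity|].
    eapply put_comp'. apply (fm_comp _ _ _ _ (fmH _ _ _ Hc)).
Defined.
Definition KPpi2 {C D} (m : Lens C D) : Lens (KP m) C.
Proof.
  refine {| get := KPpi2F m; put := KPput2 m |}.
  - intros [[x1 x2] px] [xi pxi]; apply sig_eq; simpl in *.
    rewrite put_dom, pxi; reflexivity.
  - reflexivity.
  - intros [[x1 x2] px] H; apply sig_eq; simpl in *. f_equal.
    rewrite <- (put_idm m x1 (dom_idm _)). apply put_congr; [reflexivity|]; simpl.
    rewrite fm_idm, px; reflexivity.
  - intros [[x1 x2] px] [b pb] b' Hb' Hc Hd He; apply sig_eq; simpl in *.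
    f_equal; [|apply comp_congr; reflexivity].
    eapply put_comp'. apply (fm_comp _ _ _ _ (fmH _ _ _ Hc)).
Defined.

Lemma mono_inj {C D} (m : Lens C D) : lens_mono m ->
  (forall c1 c2, fo (get m) c1 = fo (get m) c2 -> c1 = c2) /\
  (forall u v, fm (get m) u = fm (get m) v -> u = v).
Proof.
  intro Hm.
  assert (E : KPpi1 m = KPpi2 m).
  { apply Hm. apply lens_ext.
    - intros [[x1 x2] px]; exact px.
    - intros [[u1 u2] pu]; exact pu.
    - intros [[x1 x2] px] d H1 H2. apply sig_eq; simpl. f_equal.
      + apply put_congr; [reflexivity|]; simpl. rewrite put_get; reflexivity.
      + apply put_congr; [reflexivity|]; simpl. rewrite put_get; reflexivity. }
  split.
  - intros c1 c2 H. exact (leq_fo E (exist _ (c1, c2) H)).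
  - intros u v H. exact (leq_fm E (exist _ (u, v) H)).
Qed.
Definition decP (P : Prop) : bool := if excluded_middle_informative P then true else false.
Lemma decP_t (P : Prop) : P -> decP P = true.
Proof. unfold decP; destruct (excluded_middle_informative P); tauto. Qed.
Lemma decP_f (P : Prop) : ~ P -> decP P = false.
Proof. unfold decP; destruct (excluded_middle_informative P); tauto. Qed.
Lemma decP_spec (P : Prop) : decP P = true -> P.
Proof. unfold decP; destruct (excluded_middle_informative P); easy. Qed.

Definition DOb (B : Cat) (U : Ob B -> Prop) := {p : Ob B * bool | snd p = true -> ~ U (fst p)}.
Definition DMor (B : Cat) (U : Ob B -> Prop) := {p : Mor B * bool | snd p = true -> ~ U (dom (fst p))}.

Definition Ddom B U (p : DMor B U) : DOb B U :=
  exist _ (dom (fst (proj1_sig p)), snd (proj1_sig p)) (proj2_sig p).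
Lemma Dcod_pf B U (p : DMor B U) :
  andb (snd (proj1_sig p)) (negb (decP (U (cod (fst (proj1_sig p)))))) = true ->
  ~ U (cod (fst (proj1_sig p))).
Proof.
  simpl. intros H HU. rewrite (decP_t _ HU) in H. rewrite Bool.andb_false_r in H. discriminate.
Qed.
Definition Dcod B U (p : DMor B U) : DOb B U :=
  exist _ (cod (fst (proj1_sig p)), andb (snd (proj1_sig p)) (negb (decP (U (cod (fst (proj1_sig p))))))) (Dcod_pf B U p).
Lemma Didm_pf B U (x : DOb B U) :
  snd (idm (fst (proj1_sig x)), snd (proj1_sig x)) = true ->
  ~ U (dom (fst (idm (fst (proj1_sig x)), snd (proj1_sig x)))).
Proof. simpl; rewrite dom_idm; exact (proj2_sig x). Qed.
Definition Didm B U (x : DOb B U) : DMor B U :=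
  exist _ (idm (fst (proj1_sig x)), snd (proj1_sig x)) (Didm_pf B U x).
Lemma Dcomp_pf B U (q p : DMor B U) H1 :
  snd (comp (fst (proj1_sig q)) (fst (proj1_sig p)) H1, snd (proj1_sig p)) = true ->
  ~ U (dom (fst (comp (fst (proj1_sig q)) (fst (proj1_sig p)) H1, snd (proj1_sig p)))).
Proof. simpl; rewrite dom_comp; exact (proj2_sig p). Qed.
Definition Dcomp B U (q p : DMor B U) (H : Dcod B U p = Ddom B U q) : DMor B U :=
  exist _ (comp (fst (proj1_sig q)) (fst (proj1_sig p)) (f_equal (fun z => fst (proj1_sig z)) H),
           snd (proj1_sig p)) (Dcomp_pf B U q p _).

Definition Dbl (B : Cat) (U : Ob B -> Prop) (Ufwd : forall u : Mor B, U (dom u) -> U (cod u)) : Cat.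
Proof.
  refine {| Ob := DOb B U; Mor := DMor B U; dom := Ddom B U; cod := Dcod B U;
            idm := Didm B U; comp := Dcomp B U |}.
  - intros [[x1 x2] px]; apply sig_eq; simpl; rewrite !dom_idm; reflexivity.
  - intros [[x1 x2] px]; apply sig_eq; simpl in *; rewrite !cod_idm.
    destruct x2; [|reflexivity]. rewrite decP_f; auto.
  - intros [[g1 g2] pg] [[f1 f2] pf] H; apply sig_eq; simpl; rewrite !dom_comp; reflexivity.
  - intros [[g1 g2] pg] [[f1 f2] pf] H; apply sig_eq; simpl in *; rewrite !cod_comp.
    pose proof (f_equal (fun z => fst (proj1_sig z)) H) as H1.
    pose proof (f_equal (fun z => snd (proj1_sig z)) H) as H2. simpl in H1, H2.
    f_equal. subst g2.
    destruct (classic (U (cod g1))) as [HU|HU].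
    + rewrite (decP_t _ HU). rewrite !Bool.andb_false_r; reflexivity.
    + rewrite (decP_f _ HU). rewrite (decP_f (U (cod f1))).
      * rewrite !Bool.andb_true_r; reflexivity.
      * intro HU'. apply HU. apply Ufwd. rewrite <- H1. exact HU'.
  - intros [[f1 f2] pf] H; apply sig_eq; simpl; rewrite !comp_idl; reflexivity.
  - intros [[f1 f2] pf] H; apply sig_eq; simpl; rewrite !comp_idr; reflexivity.
  - intros [[h1 h2] ph] [[g1 g2] pg] [[f1 f2] pf] H1 H2 H3 H4; apply sig_eq; simpl.
    f_equal; apply comp_assoc.
Defined.

Lemma Dfo_pf B U (k : bool) (b : Ob B) :
  andb k (negb (decP (U b))) = true -> ~ U b.
Proof. simpl. intros H HU. rewrite (decP_t _ HU) in H. rewrite Bool.andb_false_r in H. discriminate. Qed.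
Lemma Dfm_pf B U (k : bool) (u : Mor B) :
  andb k (negb (decP (U (dom u)))) = true -> ~ U (dom u).
Proof. simpl. intros H HU. rewrite (decP_t _ HU) in H. rewrite Bool.andb_false_r in H. discriminate. Qed.

Definition DinF B U Ufwd (k : bool) : Functor B (Dbl B U Ufwd).
Proof.
  refine {| fo := fun b => (exist _ (b, andb k (negb (decP (U b)))) (Dfo_pf B U k b) : Ob (Dbl B U Ufwd));
            fm := fun u => (exist _ (u, andb k (negb (decP (U (dom u))))) (Dfm_pf B U k u) : Mor (Dbl B U Ufwd)) |}.
  - intro f; apply sig_eq; reflexivity.
  - intro f; apply sig_eq; simpl. f_equal.
    destruct (classic (U (cod f))) as [HU|HU].
    + rewrite (decP_t _ HU). rewrite !Bool.andb_false_r; reflexivity.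
    + rewrite (decP_f _ HU). rewrite (decP_f (U (dom f))).
      * rewrite !Bool.andb_true_r; reflexivity.
      * intro HU'. apply HU. apply Ufwd. exact HU'.
  - intro x; apply sig_eq; simpl. rewrite dom_idm; reflexivity.
  - intros g f H H'; apply sig_eq; simpl. rewrite dom_comp. f_equal. apply comp_congr; reflexivity.
Defined.

Definition Din B U Ufwd (k : bool) : Lens B (Dbl B U Ufwd).
Proof.
  refine {| get := DinF B U Ufwd k;
            put := fun b xi => fst (proj1_sig (proj1_sig xi)) |}.
  - intros b [[[x t] px] H]; simpl in *.
    exact (f_equal (fun z => fst (proj1_sig z)) H).
  - intros b [[[x t] px] H]; apply sig_eq; simpl in *.
    pose proof (f_equal (fun z => fst (proj1_sig z)) H) as H1.
    pose proof (f_equal (fun z => snd (proj1_sig z)) H) as H2. simpl in H1, H2.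
    rewrite H1, H2; reflexivity.
  - reflexivity.
  - intros; simpl. apply comp_congr; reflexivity.
Defined.

Lemma epi_surj {A B} (e : Lens A B) (U : Ob B -> Prop)
  (Ufwd : forall u : Mor B, U (dom u) -> U (cod u))
  (Ue : forall a, U (fo (get e) a)) : lens_epi e -> forall b, U b.
Proof.
  intros He b.
  assert (E : Din B U Ufwd true = Din B U Ufwd false).
  { apply He. apply lens_ext.
    - intro a; apply sig_eq; simpl. rewrite (decP_t _ (Ue a)); reflexivity.
    - intro f; apply sig_eq; simpl. rewrite fm_dom, (decP_t _ (Ue _)); reflexivity.
    - intros a x H1 H2. simpl. apply put_congr; reflexivity. }
  pose proof (f_equal (fun z => snd (proj1_sig z)) (leq_fo E b)) as H. simpl in H.
  destruct (decP (U b)) eqn:Hd.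
  - apply decP_spec; exact Hd.
  - discriminate.
Qed.
Definition hob {B C D} (m : Lens C D) (g : Lens B D) (Hall : forall b, exists c, fo (get m) c = fo (get g) b) (b : Ob B) : Ob C :=
  proj1_sig (constructive_indefinite_description _ (Hall b)).
Lemma hob_spec {B C D} (m : Lens C D) (g : Lens B D) (Hall : forall b, exists c, fo (get m) c = fo (get g) b) b :
  fo (get m) (hob m g Hall b) = fo (get g) b.
Proof. unfold hob; exact (proj2_sig (constructive_indefinite_description _ (Hall b))). Qed.
Lemma hmor_pf {B C D} (m : Lens C D) (g : Lens B D) (Hall : forall b, exists c, fo (get m) c = fo (get g) b) (u : Mor B) :
  dom (fm (get g) u) = fo (get m) (hob m g Hall (dom u)).
Proof. rewrite fm_dom, hob_spec; reflexivity. Qed.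
Definition hmor {B C D} (m : Lens C D) (g : Lens B D) (Hall : forall b, exists c, fo (get m) c = fo (get g) b) (u : Mor B) : Mor C :=
  put m (hob m g Hall (dom u)) (exist _ (fm (get g) u) (hmor_pf m g Hall u)).
Lemma hmor_spec {B C D} (m : Lens C D) (g : Lens B D) (Hall : forall b, exists c, fo (get m) c = fo (get g) b) (u : Mor B) :
  fm (get m) (hmor m g Hall u) = fm (get g) u.
Proof. unfold hmor; rewrite put_get; reflexivity. Qed.

Definition hF {B C D} (m : Lens C D) (g : Lens B D) (Hall : forall b, exists c, fo (get m) c = fo (get g) b)
  (minj_o : forall c1 c2, fo (get m) c1 = fo (get m) c2 -> c1 = c2)
  (minj_m : forall u v, fm (get m) u = fm (get m) v -> u = v) : Functor B C.
Proof.
  refine {| fo := hob m g Hall; fm := hmor m g Hall |}.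
  - intro u; unfold hmor; apply put_dom.
  - intro u; apply minj_o. rewrite <- (fm_cod (get m)), hmor_spec, fm_cod, hob_spec; reflexivity.
  - intro x; apply minj_m. rewrite hmor_spec, !fm_idm, hob_spec; reflexivity.
  - intros g' f H H'; apply minj_m. rewrite hmor_spec.
    rewrite (fm_comp' (get g) _ _ H (fmH _ _ _ H)).
    rewrite (fm_comp' (get m) _ _ H' (fmH _ _ _ H')).
    apply comp_congr; symmetry; apply hmor_spec.
Defined.

Lemma hput_pf {B C D} (m : Lens C D) (g : Lens B D) (Hall : forall b, exists c, fo (get m) c = fo (get g) b) (b : Ob B)
  (x : {c : Mor C | dom c = hob m g Hall b}) :
  dom (fm (get m) (proj1_sig x)) = fo (get g) b.
Proof. rewrite fm_dom, (proj2_sig x), hob_spec; reflexivity. Qed.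
Definition hput {B C D} (m : Lens C D) (g : Lens B D) (Hall : forall b, exists c, fo (get m) c = fo (get g) b) (b : Ob B)
  (x : {c : Mor C | dom c = hob m g Hall b}) : Mor B :=
  put g b (exist _ (fm (get m) (proj1_sig x)) (hput_pf m g Hall b x)).

Definition hL {B C D} (m : Lens C D) (g : Lens B D) (Hall : forall b, exists c, fo (get m) c = fo (get g) b)
  (minj_o : forall c1 c2, fo (get m) c1 = fo (get m) c2 -> c1 = c2)
  (minj_m : forall u v, fm (get m) u = fm (get m) v -> u = v) : Lens B C.
Proof.
  refine {| get := hF m g Hall minj_o minj_m; put := hput m g Hall |}.
  - intros; unfold hput; apply put_dom.
  - intros b x; apply minj_m. simpl. rewrite hmor_spec. unfold hput; rewrite put_get; reflexivity.
  - intros b H; unfold hput. rewrite <- (put_idm g b (dom_idm _)).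
    apply put_congr; [reflexivity|]; simpl. rewrite fm_idm, hob_spec; reflexivity.
  - intros b [x px] y Hy Hc Hd He. unfold hput; simpl.
    eapply put_comp'. apply (fm_comp _ _ _ _ (fmH _ _ _ Hc)).
Defined.
Lemma dir2 {A B} (e : Lens A B) : lens_epi e ->
  forall C D (m : Lens C D), lens_mono m -> lens_left_orth e m.
Proof.
  intros He C D m Hm f g Hsq.
  destruct (mono_inj m Hm) as [mo mm].
  assert (Ufwd : forall u : Mor B, (exists c, fo (get m) c = fo (get g) (dom u)) ->
                   exists c, fo (get m) c = fo (get g) (cod u)).
  { intros u [c Hc].
    assert (pf : dom (fm (get g) u) = fo (get m) c) by (rewrite fm_dom, Hc; reflexivity).
    exists (cod (put m c (exist _ (fm (get g) u) pf))).
    rewrite <- fm_cod, put_get; simpl; apply fm_cod. }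
  assert (Ue : forall a, exists c, fo (get m) c = fo (get g) (fo (get e) a)).
  { intro a; exists (fo (get f) a). symmetry; exact (leq_fo Hsq a). }
  pose proof (epi_surj e (fun b => exists c, fo (get m) c = fo (get g) b) Ufwd Ue He) as Hall.
  set (h := hL m g Hall mo mm).
  assert (E1 : lcomp h e = f).
  { apply lens_ext.
    - intro a. simpl. apply mo. rewrite hob_spec. exact (leq_fo Hsq a).
    - intro al. simpl. apply mm. rewrite hmor_spec. exact (leq_fm Hsq al).
    - intros a x H1 H2. simpl in *. unfold hput.
      assert (Q1 : dom (fm (get m) x) = fo (get g) (fo (get e) a))
        by (rewrite fm_dom, H1, hob_spec; reflexivity).
      assert (Q2 : dom (fm (get m) x) = fo (get m) (fo (get f) a))
        by (rewrite fm_dom, H2; reflexivity).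
      pose proof (leq_put Hsq a (fm (get m) x) Q1 Q2) as P. simpl in P.
      transitivity (put e a (exist (fun b0 : Mor B => dom b0 = fo (get e) a)
           (put g (fo (get e) a) (exist _ (fm (get m) x) Q1)) (put_dom g _ _))).
      + apply put_congr; [reflexivity|]; simpl. apply put_congr; reflexivity.
      + rewrite P. apply put_congr; [reflexivity|]; simpl. apply mm. rewrite put_get; reflexivity. }
  exists h. split; [split|].
  - exact E1.
  - apply lens_ext.
    + intro b; simpl; apply hob_spec.
    + intro u; simpl; apply hmor_spec.
    + intros b x H1 H2; simpl. unfold hput. apply put_congr; [reflexivity|]; simpl. apply put_get.
  - intros h' [E1' _]. apply He. rewrite E1, E1'. reflexivity.
Qed.
Definition SOb (B : Cat) (S : Ob B -> Prop) := {b : Ob B | S b}.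
Definition SMor (B : Cat) (S : Ob B -> Prop) := {u : Mor B | S (dom u)}.
Definition Sdom B S (u : SMor B S) : SOb B S := exist _ (dom (proj1_sig u)) (proj2_sig u).
Definition Scod B S (Sfwd : forall u : Mor B, S (dom u) -> S (cod u)) (u : SMor B S) : SOb B S :=
  exist _ (cod (proj1_sig u)) (Sfwd _ (proj2_sig u)).
Lemma Sidm_pf B S (x : SOb B S) : S (dom (idm (proj1_sig x))).
Proof. rewrite dom_idm; exact (proj2_sig x). Qed.
Definition Sidm B S (x : SOb B S) : SMor B S := exist _ (idm (proj1_sig x)) (Sidm_pf B S x).
Lemma Scomp_pf B S (q p : SMor B S) H : S (dom (comp (proj1_sig q) (proj1_sig p) H)).
Proof. rewrite dom_comp; exact (proj2_sig p). Qed.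
Definition Scomp B S Sfwd (q p : SMor B S) (H : Scod B S Sfwd p = Sdom B S q) : SMor B S :=
  exist _ (comp (proj1_sig q) (proj1_sig p) (f_equal (@proj1_sig _ _) H)) (Scomp_pf B S q p _).

Definition SubCat (B : Cat) (S : Ob B -> Prop) (Sfwd : forall u : Mor B, S (dom u) -> S (cod u)) : Cat.
Proof.
  refine {| Ob := SOb B S; Mor := SMor B S; dom := Sdom B S; cod := Scod B S Sfwd;
            idm := Sidm B S; comp := Scomp B S Sfwd |}.
  - intros [x px]; apply sig_eq; simpl; apply dom_idm.
  - intros [x px]; apply sig_eq; simpl; apply cod_idm.
  - intros [g pg] [f pf] H; apply sig_eq; simpl; apply dom_comp.
  - intros [g pg] [f pf] H; apply sig_eq; simpl; apply cod_comp.
  - intros [f pf] H; apply sig_eq; simpl; apply comp_idl.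
  - intros [f pf] H; apply sig_eq; simpl; apply comp_idr.
  - intros [h ph] [g pg] [f pf] H1 H2 H3 H4; apply sig_eq; simpl. apply comp_assoc.
Defined.

Definition SinclF B S Sfwd : Functor (SubCat B S Sfwd) B.
Proof.
  refine {| fo := fun x : Ob (SubCat B S Sfwd) => proj1_sig x;
            fm := fun u : Mor (SubCat B S Sfwd) => proj1_sig u |}.
  - reflexivity.
  - reflexivity.
  - reflexivity.
  - intros; simpl; apply comp_congr; reflexivity.
Defined.
Lemma Sput_pf B S (x : SOb B S) (xi : {b : Mor B | dom b = proj1_sig x}) : S (dom (proj1_sig xi)).
Proof. rewrite (proj2_sig xi); exact (proj2_sig x). Qed.
Definition Sincl B S Sfwd : Lens (SubCat B S Sfwd) B.
Proof.
  refine {| get := SinclF B S Sfwd;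
            put := fun x xi => (exist _ (proj1_sig xi) (Sput_pf B S x xi) : Mor (SubCat B S Sfwd)) |}.
  - intros x xi; apply sig_eq; simpl; exact (proj2_sig xi).
  - reflexivity.
  - intros; apply sig_eq; reflexivity.
  - intros; apply sig_eq; simpl; apply comp_congr; reflexivity.
Defined.

Lemma Sincl_mono B S Sfwd : lens_mono (Sincl B S Sfwd).
Proof.
  intros X g1 h1 E. apply lens_ext.
  - intro a; apply sig_eq; exact (leq_fo E a).
  - intro f; apply sig_eq; exact (leq_fm E f).
  - intros a x H1 H2.
    pose proof (leq_put E a (proj1_sig x) (f_equal (@proj1_sig _ _) H1)
                  (f_equal (@proj1_sig _ _) H2)) as P. simpl in P.
    etransitivity; [|etransitivity; [exact P|]].
    + apply put_congr; [reflexivity|]; simpl. apply sig_eq; reflexivity.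
    + apply put_congr; [reflexivity|]; simpl. apply sig_eq; reflexivity.
Qed.

Definition idF (B : Cat) : Functor B B.
Proof.
  refine {| fo := fun x => x; fm := fun u => u |}; try reflexivity.
  intros; apply comp_congr; reflexivity.
Defined.
Definition idL (B : Cat) : Lens B B.
Proof.
  refine {| get := idF B; put := fun x xi => proj1_sig xi |}.
  - intros x xi; exact (proj2_sig xi).
  - reflexivity.
  - reflexivity.
  - intros; simpl; apply comp_congr; reflexivity.
Defined.

Lemma Scor_fm_pf {A B} (e : Lens A B) (S : Ob B -> Prop) (Se : forall a, S (fo (get e) a)) (u : Mor A) :
  S (dom (fm (get e) u)).
Proof. rewrite fm_dom; apply Se. Qed.
Definition ScorF {A B} (e : Lens A B) (S : Ob B -> Prop) Sfwd (Se : forall a, S (fo (get e) a)) :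
  Functor A (SubCat B S Sfwd).
Proof.
  refine {| fo := fun a => (exist _ (fo (get e) a) (Se a) : Ob (SubCat B S Sfwd));
            fm := fun u => (exist _ (fm (get e) u) (Scor_fm_pf e S Se u) : Mor (SubCat B S Sfwd)) |}.
  - intro f; apply sig_eq; simpl; apply fm_dom.
  - intro f; apply sig_eq; simpl; apply fm_cod.
  - intro f; apply sig_eq; simpl; apply fm_idm.
  - intros; apply sig_eq; simpl; apply fm_comp.
Defined.
Definition Scor {A B} (e : Lens A B) (S : Ob B -> Prop) Sfwd (Se : forall a, S (fo (get e) a)) :
  Lens A (SubCat B S Sfwd).
Proof.
  refine {| get := ScorF e S Sfwd Se;
            put := fun a xi => put e a (exist _ (proj1_sig (proj1_sig xi))
                                  (f_equal (@proj1_sig _ _) (proj2_sig xi))) |}.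
  - intros; apply put_dom.
  - intros; apply sig_eq; simpl; apply put_get.
  - intros; rewrite <- (put_idm e a (dom_idm _)); apply put_congr; reflexivity.
  - intros; simpl. eapply put_comp'. reflexivity.
Defined.
Lemma dir1 {A B} (e : Lens A B) :
  (forall (C D : Cat) (m : Lens C D), lens_mono m -> lens_left_orth e m) -> lens_epi e.
Proof.
  intros Horth X g h Hgh.
  set (P := fun b' : Ob B => fo (get g) b' = fo (get h) b' /\
              (forall v : Mor B, dom v = b' -> fm (get g) v = fm (get h) v) /\
              (forall x H1 H2, put g b' (exist _ x H1) = put h b' (exist _ x H2))).
  assert (Pe : forall a, P (fo (get e) a)).
  { intro a. split; [|split].
    - exact (leq_fo Hgh a).
    - intros v Hv.
      pose proof (put_get e a (exist _ v Hv)) as Ev. simpl in Ev. rewrite <- Ev.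
      exact (leq_fm Hgh _).
    - intros x H1 H2. pose proof (leq_put Hgh a x H1 H2) as Q. simpl in Q.
      apply (f_equal (fm (get e))) in Q. rewrite !put_get in Q. exact Q. }
  set (S := fun b : Ob B => forall u : Mor B, dom u = b -> P (cod u)).
  assert (Se : forall a, S (fo (get e) a)).
  { intros a u Hu.
    pose proof (put_get e a (exist _ u Hu)) as Eu. simpl in Eu.
    rewrite <- Eu, fm_cod. apply Pe. }
  assert (Sfwd : forall u : Mor B, S (dom u) -> S (cod u)).
  { intros u Su v Hv.
    pose proof (Su (comp v u (eq_sym Hv)) (dom_comp _ _ _)) as H.
    rewrite cod_comp in H; exact H. }
  assert (SP : forall b, S b -> P b).
  { intros b Sb. pose proof (Sb (idm b) (dom_idm b)) as H. rewrite cod_idm in H; exact H. }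
  assert (Sq : lcomp (idL B) e = lcomp (Sincl B S Sfwd) (Scor e S Sfwd Se)).
  { apply lens_ext; try reflexivity.
    intros a x H1 H2; simpl. apply put_congr; reflexivity. }
  destruct (Horth _ _ (Sincl B S Sfwd) (Sincl_mono B S Sfwd) _ _ Sq) as [h0 [[_ E2] _]].
  assert (Sall : forall b, S b).
  { intro b. pose proof (leq_fo E2 b) as Eb. simpl in Eb. rewrite <- Eb.
    exact (proj2_sig (fo (get h0) b)). }
  apply lens_ext.
  - intro b; exact (proj1 (SP b (Sall b))).
  - intro v; exact (proj1 (proj2 (SP _ (Sall (dom v)))) v eq_refl).
  - intros b x H1 H2; exact (proj2 (proj2 (SP b (Sall b))) x H1 H2).
Qed.

Theorem corollary6p6 (A B : Cat) (e : Lens A B) :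
  (forall (C D : Cat) (m : Lens C D), lens_mono m -> lens_left_orth e m)
  <-> lens_epi e.
Proof.
  split.
  - apply dir1.
  - intros He C D m Hm. exact (dir2 e He C D m Hm).
Qed.
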